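(* Let $b_j\in\{-1,1\}$, $a_j\in\mathbb{R}^n$ for $j\in[q]$, $K\in\{0,\ldots,n-1\}$, $\gamma>0$, and let $x^*$ be a d-stationary point of $$\min_{x\in\mathbb{R}^n}\ \sum_{j\in[q]}\log\big(1+\exp(-b_ja_j^\top x)\big)+\gamma T_{K,n,1}(x).$$ If $\gamma>\sum_{j\in[q]}\|a_j\|_\infty$, then $T_{K,n,1}(x^* )=0$, i.e., $x^*$ has at most $K$ nonzero entries.
   Context: $T_{K,n,1}(x)$ is the sum of the $n-K$ smallest values among $|x_1|,\ldots,|x_n|$. A point is d-stationary if the directional derivative of the objective there is $\ge0$ in every direction. *)

(* Defs.v *)
From HB Require Import structures.
From mathcomp Require Import all_boot all_order all_algebra.
From mathcomp Require Import all_classical all_reals all_analysis.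
Set Implicit Arguments. Unset Strict Implicit. Unset Printing Implicit Defensive.
Import Order.TTheory GRing.Theory Num.Theory.
Import numFieldNormedType.Exports.
Local Open Scope classical_set_scope.
Local Open Scope ring_scope.

Section Defs.
Variable R : realType.

Definition Tk1 (n K : nat) (x : 'I_n -> R) : R :=
  \sum_(i < n - K) nth 0 (sort <=%R [seq `|x j| | j <- enum 'I_n]) i.

Definition dotv (n : nat) (a x : 'I_n -> R) : R := \sum_(i < n) a i * x i.

Definition norminf (n : nat) (a : 'I_n -> R) : R := \big[Num.max/0]_(i < n) `|a i|.

Definition logreg_obj (n q K : nat) (a : 'I_q -> 'I_n -> R) (b : 'I_q -> R)
  (gamma : R) (x : 'I_n -> R) : R :=
  \sum_(j < q) ln (1 + expR (- (b j * dotv (a j) x))) + gamma * Tk1 K x.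

Definition has_dir_deriv (n : nat) (f : ('I_n -> R) -> R) (x d : 'I_n -> R) (l : R) : Prop :=
  (fun t : R => (f (fun i => x i + t * d i) - f x) / t) @ 0^'+ --> l.

Definition d_stationary (n : nat) (f : ('I_n -> R) -> R) (x : 'I_n -> R) : Prop :=
  forall d : 'I_n -> R, exists l : R, has_dir_deriv f x d l /\ 0 <= l.

End Defs.

(* Main.v *)
Require Import Defs.
From HB Require Import structures.
From mathcomp Require Import all_boot all_order all_algebra.
From mathcomp Require Import all_classical all_reals all_analysis.
From mathcomp Require Import ring lra zify.
Import Order.TTheory GRing.Theory Num.Theory.
Local Open Scope ring_scope.

Section Helpers.
Variable R : realType.

Lemma lse_lip (u v : R) : ln (1 + expR u) - ln (1 + expR v) <= `|u - v|.
Proof.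
have pu : 0 < 1 + expR u by rewrite ltr_wpDr // expR_gt0.
have pv : 0 < 1 + expR v by rewrite ltr_wpDr // expR_gt0.
have [uv|vu] := leP u v.
  apply: le_trans (normr_ge0 _); rewrite subr_le0 ler_ln ?posrE //.
  by rewrite lerD2l ler_expR.
have e1 : 1 <= expR (u - v).
  by apply: le_trans (expR_ge1Dx _); rewrite lerDl subr_ge0 ltW.
have h0 : 1 + expR u <= expR (u - v) * (1 + expR v).
  by rewrite mulrDr mulr1 -expRD subrK lerD2r.
have : ln (1 + expR u) <= ln (expR (u - v) * (1 + expR v)).
  rewrite ler_ln; [exact: h0| by rewrite posrE |by rewrite posrE mulr_gt0 ?expR_gt0].
rewrite lnM ?posrE ?expR_gt0 // expRK => h.
rewrite gtr0_norm ?subr_gt0 //; lra.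
Qed.

Lemma bigmax_ge (n : nat) (f : 'I_n -> R) i0 : `|f i0| <= \big[Num.max/0]_(i < n) `|f i|.
Proof.
have : i0 \in index_enum 'I_n by rewrite mem_index_enum.
rewrite unlock /=; elim: (index_enum 'I_n) => [//|h r IH] /=.
rewrite inE le_max; case/orP => [/eqP <-|/IH ->]; last by rewrite orbT.
by rewrite lexx.
Qed.

Lemma count0_le (s : seq R) p : sorted <=%R s -> (p < size s)%N -> 0 < nth 0 s p ->
  (count (fun r : R => r == 0%R) s <= p)%N.
Proof.
move=> ss ps vp.
rewrite -(cat_take_drop p s) count_cat.
have -> : count (fun r : R => r == 0%R) (drop p s) = 0%N.
  apply/eqP; rewrite -leqn0 leqNgt -has_count; apply/negP => /(has_nthP 0) [k].
  rewrite size_drop nth_drop => kl /eqP e.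
  have := @sorted_leq_nth _ _ le_trans lexx 0 s ss p (p + k).
  rewrite !inE e ps -ltn_subRL kl leq_addr => /(_ isT isT isT) h.
  by move: (lt_le_trans vp h); rewrite ltxx.
by rewrite addn0 (leq_trans (count_size _ _)) // size_take; case: ifP => // /negbT; rewrite -leqNgt.
Qed.

Lemma sorted_set_nth (s : seq R) p w : sorted <=%R s -> (p < size s)%N ->
  (forall k, (k < p)%N -> nth 0 s k = 0) -> 0 <= w -> w <= nth 0 s p ->
  sorted <=%R (set_nth 0 s p w).
Proof.
move=> ss ps z w0 wp.
have sz : size (set_nth 0 s p w) = size s by rewrite size_set_nth; apply/maxn_idPr.
apply/(sortedP 0) => i; rewrite sz => il.
have := (sortedP 0 ss) i il.
rewrite !nth_set_nth /=.
have [ip|ip] := eqVneq i p.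
  rewrite ip (gtn_eqF (ltnSn p)).
  by move=> h; exact: le_trans wp h.
have [ip1|ip1] := eqVneq i.+1 p.
  by rewrite z // ip1.
by [].
Qed.

Lemma sum_set_nth (s : seq R) m p w : (p < m)%N -> (p < size s)%N ->
  \sum_(i < m) nth 0 (set_nth 0 s p w) i = \sum_(i < m) nth 0 s i + (w - nth 0 s p).
Proof.
move=> pm ps.
rewrite [LHS](bigD1 (Ordinal pm)) //= [in RHS](bigD1 (Ordinal pm)) //= nth_set_nth /= eqxx.
rewrite (eq_bigr (fun i : 'I_m => nth 0 s i)); last first.
  move=> i ip; rewrite nth_set_nth /=; case: eqP => // e.
  by move: ip; rewrite -val_eqE /= e eqxx.
lra.
Qed.

Lemma map_set_nth (L : seq R) (Is : seq nat) p w : uniq Is -> (p < size Is)%N ->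
  set_nth 0 [seq nth 0 L i | i <- Is] p w =
  [seq nth 0 (set_nth 0 L (nth 0%N Is p) w) i | i <- Is].
Proof.
move=> uI pI.
apply: (@eq_from_nth _ (0:R)).
  by rewrite size_set_nth !size_map; apply/maxn_idPr.
move=> k; rewrite size_set_nth size_map => kl.
have kI : (k < size Is)%N by move: kl; rewrite (maxn_idPr pI).
rewrite (nth_set_nth (0:R) [seq L`_i | i <- Is]) /= !(nth_map 0%N) // (nth_set_nth (0:R) L) /=.
by rewrite nth_uniq.
Qed.

Lemma count_enum_card n (p : pred 'I_n) : count p (enum 'I_n) = #|p|.
Proof. by rewrite cardE /enum_mem size_filter (@eq_filter _ _ predT) // filter_predT. Qed.

End Helpers.

Theorem mainTheorem8 (R : realType) (n q K : nat)
  (a : 'I_q -> 'I_n -> R) (b : 'I_q -> R) (gamma : R) (xs : 'I_n -> R) :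
  (forall j, b j = 1 \/ b j = -1) ->
  (K < n)%N ->
  0 < gamma ->
  d_stationary (logreg_obj K a b gamma) xs ->
  gamma > \sum_(j < q) norminf (a j) ->
  Tk1 K xs = 0 /\ (#|[set i | xs i != 0%R]| <= K)%N.
Proof.
move=> hb hK hg hst hS.
set S := \sum_(j < q) norminf (a j).
set L := [seq `|xs j| | j <- enum 'I_n].
set s := sort <=%R L.
set c := #|[set i | xs i != 0%R]|.
have ss : sorted <=%R s := sort_sorted le_total L.
have ps : perm_eq s L by rewrite perm_sort perm_refl.
have szL : size L = n by rewrite size_map size_enum_ord.
have szs : size s = n by rewrite size_sort size_map size_enum_ord.
have Lnn : all (fun r : R => 0 <= r) s.
  by rewrite (perm_all _ ps) all_map; apply/allP => j _ /=.
have Lnn' : forall k, (k < n)%N -> 0 <= nth 0 s k.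
  by move=> k kn; move/(all_nthP 0): Lnn => /(_ k); rewrite szs => /(_ kn).
have cnt : count (predC (fun r : R => r == 0%R)) s = c.
  have -> : c = #|[pred i | xs i != 0]| by apply: eq_card => i; rewrite inE.
  rewrite (permP ps) count_map -count_enum_card; apply: eq_count => i /=.
  by rewrite normr_eq0.
have cnt0 : (count (fun r : R => r == 0%R) s + c = n)%N.
  by rewrite -cnt count_predC szs.
have hc : (c <= K)%N.
  rewrite leqNgt; apply/negP => Kc.
  set m := (n - K)%N.
  have cm : (count (fun r : R => r == 0%R) s < m)%N by rewrite /m; lia.
  have ex : exists k, (k < m)%N && (nth 0 s k != 0).
    have [/hasP [k]|allz] := boolP (has (fun k => nth 0 s k != 0) (iota 0 m)).
      by rewrite mem_iota add0n => /andP [_ km] nz; exists k; rewrite km nz.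
    exfalso; move: allz; rewrite -all_predC => /allP allz.
    have mn : (m <= size s)%N by rewrite szs /m; lia.
    have : (count (fun r : R => r == 0%R) (take m s) = m)%N.
      rewrite -{2}(size_takel mn).
      apply/eqP; rewrite -all_count; apply/(all_nthP 0) => k kl.
      rewrite (size_takel mn) in kl.
      rewrite nth_take //.
      by have := allz k; rewrite mem_iota add0n /= negbK => ->.
    have := count_cat (fun r : R => r == 0%R) (take m s) (drop m s).
    rewrite cat_take_drop; lia.
  case: (ex_minnP ex) => p /andP [pm pnz] pmin.
  have pz : forall k, (k < p)%N -> nth 0 s k = 0.
    move=> k kp; apply/eqP; apply/negPn/negP => nz.
    have := pmin k; rewrite nz (ltn_trans kp pm) => /(_ isT); rewrite leqNgt kp.
    by [].
  have pn : (p < n)%N by move: pm; rewrite /m; lia.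
  have vpos : 0 < nth 0 s p.
    by rewrite lt_def pnz Lnn'.
  have /(perm_iotaP 0) [Is pIs sE] := ps.
  have uI : uniq Is by rewrite (perm_uniq pIs) iota_uniq.
  have szI : size Is = n by rewrite (perm_size pIs) size_iota size_map size_enum_ord.
  set j0 := nth 0%N Is p.
  have j0n : (j0 < n)%N.
    have : j0 \in Is by apply: mem_nth; rewrite szI.
    by rewrite (perm_mem pIs) mem_iota size_map size_enum_ord.
  set i0 : 'I_n := Ordinal j0n.
  have vE : nth 0 s p = `|xs i0|.
    rewrite sE (nth_map 0%N) ?szI // /L (nth_map i0) ?size_enum_ord //.
    by have -> : nth i0 (enum 'I_n) j0 = i0 := nth_ord_enum i0 i0.
  set v := nth 0 s p.
  have x0 : xs i0 != 0 by rewrite -normr_gt0 -vE.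
  set d := fun i : 'I_n => if i == i0 then - Num.sg (xs i0) else 0.
  have [l [hl l0]] := hst d.
  have key : forall t, 0 < t -> t < v ->
      (logreg_obj K a b gamma (fun i => xs i + t * d i) - logreg_obj K a b gamma xs) / t
        <= S - gamma.
    move=> t t0 tv.
    have di0 : d i0 = - Num.sg (xs i0) by rewrite /d eqxx.
    have dn : forall i, i != i0 -> d i = 0 by move=> i /negbTE ni; rewrite /d ni.
    have nd : `|d i0| = 1 by rewrite di0 normrN normr_sg x0.
    have Lt : [seq `|xs j + t * d j| | j <- enum 'I_n] = set_nth 0 L j0 (v - t).
      apply: (@eq_from_nth _ (0:R)).
        by rewrite size_set_nth szL size_map size_enum_ord; apply/esym/maxn_idPr.
      move=> k; rewrite size_map size_enum_ord => kn.
      rewrite (nth_map i0) ?size_enum_ord //.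
      have -> : nth i0 (enum 'I_n) k = Ordinal kn := nth_ord_enum i0 (Ordinal kn).
      rewrite nth_set_nth /= /L (nth_map i0) ?size_enum_ord //.
      have -> : nth i0 (enum 'I_n) k = Ordinal kn := nth_ord_enum i0 (Ordinal kn).
      have [kj|kj] := eqVneq k j0.
        have e : Ordinal kn = i0 by apply/val_inj.
        rewrite e di0.
        have -> : xs i0 + t * - Num.sg (xs i0) = Num.sg (xs i0) * (`|xs i0| - t).
          by rewrite mulrBr (esym (numEsg _)) mulrN mulrC.
        by rewrite normrM normr_sg x0 mul1r -vE ger0_norm // subr_ge0 ltW.
      have e : Ordinal kn != i0 by rewrite -val_eqE /=.
      by rewrite dn // mulr0 addr0.
    have Tt : Tk1 K (fun i => xs i + t * d i) = Tk1 K xs - t.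
      rewrite /Tk1 Lt -/L -/s.
      have -> : sort <=%R (set_nth 0 L j0 (v - t)) = set_nth 0 s p (v - t).
        apply: (sorted_eq le_trans le_anti); first exact: sort_sorted le_total _.
          apply: (@sorted_set_nth R) => //; first by rewrite szs.
            by rewrite subr_ge0 ltW.
          by rewrite lerBlDr lerDl ltW.
        rewrite perm_sort sE (@map_set_nth R) // ?szI //.
        rewrite perm_sym; apply/(perm_iotaP 0); exists Is => //.
        have sLI : size L = size Is by rewrite (perm_size pIs) size_iota.
        by rewrite size_set_nth (elimT maxn_idPr) // sLI szI.
      rewrite (@sum_set_nth R) //; first by rewrite -/v; lra.
      by rewrite szs.
    have lossb : \sum_(j < q) ln (1 + expR (- (b j * dotv (a j) (fun i => xs i + t * d i))))
        - \sum_(j < q) ln (1 + expR (- (b j * dotv (a j) xs))) <= t * S.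
      rewrite -sumrB /S mulr_sumr; apply: ler_sum => j _.
      apply: le_trans (@lse_lip R _ _) _.
      have dd : dotv (a j) (fun i => xs i + t * d i) = dotv (a j) xs + a j i0 * (t * d i0).
        rewrite /dotv (eq_bigr (fun i => a j i * xs i + a j i * (t * d i))); last first.
          by move=> i _; rewrite mulrDr.
        rewrite big_split /=; congr (_ + _).
        by rewrite (bigD1 i0) //= big1 ?addr0 // => i ii; rewrite dn // !mulr0.
      rewrite dd.
      have -> : - (b j * (dotv (a j) xs + a j i0 * (t * d i0))) - - (b j * dotv (a j) xs)
          = - (b j * (a j i0 * (t * d i0))) by ring.
      have nb : `|b j| = 1 by case: (hb j) => ->; rewrite ?normrN normr1.
      rewrite normrN !normrM nb nd (gtr0_norm t0) mul1r mulr1 mulrC.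
      rewrite ler_pM2l // /norminf; exact: (@bigmax_ge R n (a j) i0).
    rewrite ler_pdivrMr // /logreg_obj Tt.
    move: lossb; set A := \sum_(j < q) _; set B := \sum_(j < q) _.
    rewrite mulrBr mulrBl; nra.
  have : l <= S - gamma.
    apply: (cvgr_to_le hl).
    by apply: filterS2 (nbhs_right_gt 0) (nbhs_right_lt vpos) => t t0 tv; exact: key.
  move: hS; rewrite -/S; lra.
split => //.
rewrite /Tk1 -/L -/s; apply: big1 => i _.
apply/eqP; apply/negPn/negP => nz.
have il : (i < size s)%N := leq_trans (ltn_ord i) (leq_trans (leq_subr K n) (eq_leq (esym szs))).
have pos : 0 < nth 0 s i by rewrite lt_def nz (Lnn' i (leq_trans il (eq_leq szs))).
have := @count0_le R _ _ ss il pos.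
have := ltn_ord i; lia.
Qed.
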